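(* Suppose Assumption 1 holds. Let $(\boldsymbol\lambda^*,\boldsymbol\gamma^* )\in\mathbb R^K\times\mathbb R^K$ be a minimizer of $$(\boldsymbol\lambda,\boldsymbol\gamma)\mapsto \langle\boldsymbol\lambda,\boldsymbol\alpha\rangle+\sum_{s=1}^K\mathbb E\big[(G(X,s,\boldsymbol\lambda,\boldsymbol\gamma))_+\,\big|\,S=s\big].$$ Set $c_{\boldsymbol\gamma^*,s}=\frac12\big(\frac{\bar\alpha\gamma^*_s}{\alpha_s p_s}-\langle\mathbf 1,\boldsymbol\gamma^*\rangle\big)$ and define, for $(x,s)\in\mathbb R^d\times[K]$, $$g^*(x,s)=\begin{cases} r & \text{if } G(x,s,\boldsymbol\lambda^*,\boldsymbol\gamma^* )\le 0,\\ \mathbb 1\big(\eta(x,s)\ge \tfrac12+c_{\boldsymbol\gamma^*,s}\big) & \text{otherwise.}\end{cases}$$ Then $g^*$ is an optimal classifier for problem (DPWA): it satisfies the constraints of (DPWA) and minimizes $\mathcal R$ among all classifiers with abstention satisfying them.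
   Context: Let $(X,S,Y)$ be a random triple with law $\mathbb P$ on $\mathbb R^d\times[K]\times\{0,1\}$, $[K]=\{1,\dots,K\}$. Write $p_s=\mathbb P(S=s)>0$ and $\eta(x,s)=\mathbb E[Y\mid X=x,S=s]$. A classifier with abstention is a measurable map $g:\mathbb R^d\times[K]\to\{0,1,r\}$, where $r$ means ''reject''. Define $\mathcal R(g)=\mathbb P(Y\neq g(X,S)\mid g(X,S)\neq r)$, $\mathrm{NA}_s(g)=\mathbb P(g(X,S)\neq r\mid S=s)$, $\mathrm{PT}_s(g)=\mathbb P(g(X,S)=1\mid S=s,\,g(X,S)\neq r)$, $\mathrm{PT}(g)=\mathbb P(g(X,S)=1\mid g(X,S)\neq r)$. Fix $\boldsymbol\alpha=(\alpha_1,\dots,\alpha_K)\in(0,1]^K$ and set $\bar\alpha=\sum_s p_s\alpha_s$. Problem (DPWA): minimize $\mathcal R(g)$ over classifiers with abstention subject to $\mathrm{NA}_s(g)=\alpha_s$ and $\mathrm{PT}_s(g)=\mathrm{PT}(g)$ for all $s\in[K]$. $\mathbf 1\in\mathbb R^K$ is the all-ones vector, $e_s$ the $s$-th standard basis vector, $(a)_+=\max(a,0)$. Assumption 1: for every $s\in[K]$, the conditional law of $\eta(X,S)$ given $S=s$ is non-atomic. Define $$G(x,s,\boldsymbol\lambda,\boldsymbol\gamma)=\Big|\tfrac{p_s}{2\bar\alpha}\big(1-2\eta(x,s)-\langle\boldsymbol\gamma,\mathbf 1\rangle\big)+\tfrac{\langle\boldsymbol\gamma,e_s\rangle}{2\alpha_s}\Big|-\tfrac{p_s}{2\bar\alpha}\big(1-\langle\boldsymbol\gamma,\mathbf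 1\rangle\big)-\langle\boldsymbol\lambda,e_s\rangle-\tfrac{\langle\boldsymbol\gamma,e_s\rangle}{2\alpha_s}.$$ *)

(* Defs.v *)
From mathcomp Require Import all_boot all_order all_algebra.
From mathcomp Require Import all_classical all_reals all_analysis.
Set Implicit Arguments. Unset Strict Implicit. Unset Printing Implicit Defensive.
Import Order.TTheory GRing.Theory Num.Theory.
Local Open Scope classical_set_scope.
Local Open Scope ring_scope.

Definition borelRd (R : realType) (d : nat) : set (set 'rV[R]_d) :=
  <<s (@open 'M[R^o]_(1, d)) >>.

Definition prob d0 (Omega : measurableType d0) (R : realType)
  (P : probability Omega R) (E : set Omega) : R := fine (P E).

(* classifier with abstention: None = reject r, Some b = predicted label b *)
Definition classifier (R : realType) (d K : nat) :=
  'rV[R]_d -> 'I_K -> option bool.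

(* measurability of g : R^d x [K] -> {0,1,r} (discrete sigma-algebras on
   [K] and {0,1,r}) *)
Definition measurable_classifier (R : realType) (d K : nat)
  (g : classifier R d K) : Prop :=
  forall (s : 'I_K) (v : option bool), borelRd [set x | g x s = v].


Definition p_of d0 (Omega : measurableType d0) (R : realType)
  (P : probability Omega R) (K : nat) (S : Omega -> 'I_K) (s : 'I_K) : R :=
  prob P [set w | S w = s].

Definition alphabar d0 (Omega : measurableType d0) (R : realType)
  (P : probability Omega R) (K : nat) (S : Omega -> 'I_K) (alpha : 'I_K -> R) : R :=
  \sum_(s < K) p_of P S s * alpha s.

Definition risk d0 (Omega : measurableType d0) (R : realType)
  (P : probability Omega R) (d K : nat) (X : Omega -> 'rV[R]_d)
  (S : Omega -> 'I_K) (Y : Omega -> bool) (g : classifier R d K) : R :=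
  prob P [set w | g (X w) (S w) <> None /\ g (X w) (S w) <> Some (Y w)]
  / prob P [set w | g (X w) (S w) <> None].

Definition NA d0 (Omega : measurableType d0) (R : realType)
  (P : probability Omega R) (d K : nat) (X : Omega -> 'rV[R]_d)
  (S : Omega -> 'I_K) (g : classifier R d K) (s : 'I_K) : R :=
  prob P [set w | S w = s /\ g (X w) (S w) <> None] / prob P [set w | S w = s].

Definition PTs d0 (Omega : measurableType d0) (R : realType)
  (P : probability Omega R) (d K : nat) (X : Omega -> 'rV[R]_d)
  (S : Omega -> 'I_K) (g : classifier R d K) (s : 'I_K) : R :=
  prob P [set w | S w = s /\ g (X w) (S w) = Some true]
  / prob P [set w | S w = s /\ g (X w) (S w) <> None].

Definition PT d0 (Omega : measurableType d0) (R : realType)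
  (P : probability Omega R) (d K : nat) (X : Omega -> 'rV[R]_d)
  (S : Omega -> 'I_K) (g : classifier R d K) : R :=
  prob P [set w | g (X w) (S w) = Some true]
  / prob P [set w | g (X w) (S w) <> None].

Definition DPWA_feasible d0 (Omega : measurableType d0) (R : realType)
  (P : probability Omega R) (d K : nat) (X : Omega -> 'rV[R]_d)
  (S : Omega -> 'I_K) (alpha : 'I_K -> R) (g : classifier R d K) : Prop :=
  measurable_classifier g /\
  forall s : 'I_K, NA P X S g s = alpha s /\ PTs P X S g s = PT P X S g.

Definition Gfun d0 (Omega : measurableType d0) (R : realType)
  (P : probability Omega R) (d K : nat) (S : Omega -> 'I_K)
  (eta : 'rV[R]_d -> 'I_K -> R) (alpha : 'I_K -> R)
  (x : 'rV[R]_d) (s : 'I_K) (lam gam : 'I_K -> R) : R :=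
  let ps := p_of P S s in
  let ab := alphabar P S alpha in
  let g1 := \sum_(j < K) gam j in
  `| ps / (2 * ab) * (1 - 2 * eta x s - g1) + gam s / (2 * alpha s) |
  - ps / (2 * ab) * (1 - g1) - lam s - gam s / (2 * alpha s).

(* the dual objective
   <lambda, alpha> + sum_s E[(G(X,s,lambda,gamma))_+ | S = s],
   with E[Z | S = s] = E[Z 1{S = s}] / P(S = s) *)
Definition dual_objective d0 (Omega : measurableType d0) (R : realType)
  (P : probability Omega R) (d K : nat) (X : Omega -> 'rV[R]_d)
  (S : Omega -> 'I_K) (eta : 'rV[R]_d -> 'I_K -> R) (alpha : 'I_K -> R)
  (lam gam : 'I_K -> R) : \bar R :=
  ((\sum_(s < K) lam s * alpha s)%:E +
   \sum_(s < K) ((p_of P S s)^-1%:E *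
       \int[P]_(w in [set w | S w = s])
          (Num.max (Gfun P S eta alpha (X w) s lam gam) 0)%:E))%E.

Definition c_gam d0 (Omega : measurableType d0) (R : realType)
  (P : probability Omega R) (K : nat) (S : Omega -> 'I_K)
  (alpha gam : 'I_K -> R) (s : 'I_K) : R :=
  (alphabar P S alpha * gam s / (alpha s * p_of P S s) - \sum_(j < K) gam j) / 2.

Definition gstar d0 (Omega : measurableType d0) (R : realType)
  (P : probability Omega R) (d K : nat) (S : Omega -> 'I_K)
  (eta : 'rV[R]_d -> 'I_K -> R) (alpha lam gam : 'I_K -> R) : classifier R d K :=
  fun x s =>
    if Gfun P S eta alpha x s lam gam <= 0 then None
    else Some (1 / 2 + c_gam P S alpha gam s <= eta x s).

(* Main.v *)
Require Import Defs.
From mathcomp Require Import all_boot all_order all_algebra.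
From mathcomp Require Import all_classical all_reals all_analysis.
From mathcomp Require Import measurable_realfun.
From mathcomp Require Import ring lra.
Import Order.TTheory GRing.Theory Num.Theory.
Local Open Scope classical_set_scope.
Local Open Scope ring_scope.
Set Implicit Arguments. Unset Strict Implicit. Unset Printing Implicit Defensive.

Section ExSec.
Context d0 (Omega : measurableType d0) (R : realType) (P : probability Omega R).

Definition BM (f : Omega -> R) := measurable_fun setT f /\ exists M, forall w, `|f w| <= M.
Definition Ex (f : Omega -> R) : R := Rintegral P setT f.

Lemma BM_int f : BM f -> P.-integrable setT (EFin \o f).
Proof.
move=> [mf [M hM]]; apply: measurable_bounded_integrable => //.
  by apply: (le_lt_trans (probability_le1 P measurableT)); rewrite ltry.
exists M; split; first by rewrite num_real.
by move=> N hN x _; apply: le_trans (hM x) (ltW hN).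
Qed.

Lemma BM_cst c : BM (fun _ => c).
Proof. by split; [exact: measurable_cst | exists `|c|]. Qed.

Lemma BM_indic A : measurable A -> BM (\1_A).
Proof.
move=> mA; split; first exact: measurable_indic.
by exists 1 => w; rewrite indicE; case: (w \in A); rewrite ?normr1 ?normr0.
Qed.

Lemma BM_add f g : BM f -> BM g -> BM (fun w => f w + g w).
Proof.
move=> [mf [M hM]] [mg [N hN]]; split; first exact: measurable_funD.
exists (M + N) => w; apply: le_trans (ler_normD _ _) _; exact: lerD.
Qed.

Lemma BM_mul f g : BM f -> BM g -> BM (fun w => f w * g w).
Proof.
move=> [mf [M hM]] [mg [N hN]]; split; first exact: measurable_funM.
exists (M * N) => w; rewrite normrM; apply: ler_pM => //.
Qed.

Lemma BM_opp f : BM f -> BM (fun w => - f w).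
Proof.
move=> [mf [M hM]]; split; first exact: measurable_funN.
by exists M => w; rewrite normrN.
Qed.

Lemma BM_sub f g : BM f -> BM g -> BM (fun w => f w - g w).
Proof. by move=> hf hg; apply: BM_add => //; exact: BM_opp. Qed.

Lemma BM_sum (I : Type) (r : seq I) (F : I -> Omega -> R) :
  (forall i, BM (F i)) -> BM (fun w => \sum_(i <- r) F i w).
Proof.
move=> hF; elim: r => [|i r IH].
  by under [fun w => _]funext do rewrite big_nil; exact: BM_cst.
by under [fun w => _]funext do rewrite big_cons; exact: BM_add.
Qed.

Lemma ExD f g : BM f -> BM g -> Ex (fun w => f w + g w) = Ex f + Ex g.
Proof. by move=> hf hg; rewrite /Ex RintegralD //; exact: BM_int. Qed.

Lemma ExB f g : BM f -> BM g -> Ex (fun w => f w - g w) = Ex f - Ex g.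
Proof. by move=> hf hg; rewrite /Ex RintegralB //; exact: BM_int. Qed.

Lemma ExZ c f : BM f -> Ex (fun w => c * f w) = c * Ex f.
Proof. by move=> hf; rewrite /Ex RintegralZl //; exact: BM_int. Qed.

Lemma Ex_le f g : BM f -> BM g -> (forall w, f w <= g w) -> Ex f <= Ex g.
Proof. by move=> hf hg fg; rewrite /Ex le_Rintegral //; exact: BM_int. Qed.

Lemma Ex_indic A : measurable A -> Ex (\1_A) = prob P A.
Proof. by move=> mA; rewrite /Ex /Rintegral integral_indic // setIT. Qed.

Lemma Ex_sum (I : Type) (r : seq I) (F : I -> Omega -> R) :
  (forall i, BM (F i)) -> Ex (fun w => \sum_(i <- r) F i w) = \sum_(i <- r) Ex (F i).
Proof.
move=> hF; elim: r => [|i r IH].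
  rewrite big_nil; under [fun w => _]funext do rewrite big_nil.
  by rewrite /Ex Rintegral_cst // mul0r.
rewrite big_cons -IH; under [fun w => _]funext do rewrite big_cons.
by rewrite ExD //; exact: BM_sum.
Qed.

Lemma Ex_set D f : measurable D -> BM f ->
  (\int[P]_(w in D) (f w)%:E = (Ex (fun w => \1_D w * f w))%:E)%E.
Proof.
move=> mD hf; rewrite integral_mkcond /Ex /Rintegral fineK; last first.
  apply: integrable_fin_num => //; apply: BM_int; apply: BM_mul => //; exact: BM_indic.
apply: eq_integral => w _; rewrite patchE indicE.
by case: (w \in D); rewrite ?mul1r ?mul0r.
Qed.

Lemma Ex_ge0 f : (forall w, 0 <= f w) -> 0 <= Ex f.
Proof. by move=> h; apply: Rintegral_ge0 => w _; exact: h. Qed.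

End ExSec.

Lemma maxE0 (R : realDomainType) (x : R) : (0 <= x /\ Num.max x 0 = x) \/ (x < 0 /\ Num.max x 0 = 0).
Proof. have [h|h] := lerP 0 x; [left; split=> //; exact/max_idPl | right; split=> //; apply/max_idPr/ltW]. Qed.
Lemma nbnd (R : realDomainType) (x : R) : x <= `|x| /\ - x <= `|x|.
Proof. by split; [exact: ler_norm | rewrite -normrN; exact: ler_norm]. Qed.
Lemma maxd (R : realDomainType) (x y c : R) : x - y <= c -> 0 <= c -> Num.max x 0 - Num.max y 0 <= c.
Proof.
move=> h c0; case: (maxE0 x) => [[h1 ->]|[h1 ->]]; case: (maxE0 y) => [[h2 ->]|[h2 ->]]; lra.
Qed.

Lemma pw (R : realDomainType) (u0 u1 b0 b1 t : R) : 0 <= t ->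
 Num.max (`|u0 + t*u1| - (b0 + t*b1)) 0 - Num.max (`|u0| - b0) 0 <=
 t * (if 0 < `|u0| - b0 then (if u0 <= 0 then - u1 - b1 else u1 - b1) else 0)
 + (if (`|u0| <= t * (`|u1| + `|b1|)) || (`| `|u0| - b0| <= t * (`|u1| + `|b1|))
    then 2 * t * (`|u1| + `|b1|) else 0).
Proof.
move=> t0.
have [hu1 hu2] := nbnd u1; have [hb1 hb2] := nbnd b1.
have tu1 : t * u1 <= t * `|u1| /\ - (t * u1) <= t * `|u1|.
  by split; [exact: ler_wpM2l | rewrite -mulrN; exact: ler_wpM2l].
have tb1 : t * b1 <= t * `|b1| /\ - (t * b1) <= t * `|b1|.
  by split; [exact: ler_wpM2l | rewrite -mulrN; exact: ler_wpM2l].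
case: tu1 tb1 => tu1a tu1b [tb1a tb1b].
have tL : t * (`|u1| + `|b1|) = t * `|u1| + t * `|b1| by rewrite mulrDr.
have Lip : `|u0 + t*u1| <= `|u0| + t * `|u1|.
  by rewrite -[t in t * `|u1|]ger0_norm // -normrM ler_normD.
have Lip2 : `|u0| <= `|u0 + t*u1| + t * `|u1|.
  have := ler_normD (u0 + t*u1) (- (t*u1)).
  by rewrite addrK normrN normrM (ger0_norm t0).
have nu1 := normr_ge0 u1; have nb1 := normr_ge0 b1.
have tn1 : 0 <= t * `|u1| by apply: mulr_ge0.
have tn2 : 0 <= t * `|b1| by apply: mulr_ge0.
case hb: (_ || _) => /=.
  apply: (@le_trans _ _ (t * (`|u1| + `|b1|))).
    apply: maxd; lra.
  have : - (t * `|u1| + t * `|b1|) <= t * (if 0 < `|u0| - b0 then (if u0 <= 0 then - u1 - b1 else u1 - b1) else 0).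
    case: ifP => _; last by rewrite mulr0; lra.
    case: ifP => _; rewrite mulrDr ?mulrN; lra.
  rewrite -mulrA tL; set D := t * (if _ then _ else _); lra.
move/negbT/norP: hb => [n1 n2]; rewrite -ltNge in n1; rewrite -ltNge in n2.
rewrite addr0.
have [h0|h0] := lerP 0 u0.
  have h1 : 0 <= u0 + t * u1 by rewrite (ger0_norm h0) in n1; lra.
  rewrite (ger0_norm h1) (ger0_norm h0).
  rewrite (ger0_norm h0) in n2 n1.
  have -> : (u0 <= 0) = false by apply/negbTE; rewrite -ltNge; lra.
  have [h3|h3] := boolP (0 < u0 - b0); rewrite ?h3 ?(negbTE h3) /=; last rewrite -leNgt in h3.
    rewrite (gtr0_norm h3) in n2.
    case: (maxE0 (u0 + t * u1 - (b0 + t * b1))) => [[? ->]|[? ->]];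
    case: (maxE0 (u0 - b0)) => [[? ->]|[? ->]]; rewrite ?mulrDr ?mulrN; lra.
  rewrite (ler0_norm h3) in n2; rewrite mulr0.
  case: (maxE0 (u0 + t * u1 - (b0 + t * b1))) => [[? ->]|[? ->]];
  case: (maxE0 (u0 - b0)) => [[? ->]|[? ->]]; lra.
have h1 : u0 + t * u1 < 0 by rewrite (ltr0_norm h0) in n1; lra.
rewrite (ltr0_norm h1) (ltr0_norm h0).
rewrite (ltr0_norm h0) in n2 n1.
have -> : (u0 <= 0) = true by apply: ltW.
have [h3|h3] := boolP (0 < - u0 - b0); rewrite ?h3 ?(negbTE h3) /=; last rewrite -leNgt in h3.
  rewrite (gtr0_norm h3) in n2.
  case: (maxE0 (- (u0 + t * u1) - (b0 + t * b1))) => [[? ->]|[? ->]];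
  case: (maxE0 (- u0 - b0)) => [[? ->]|[? ->]]; rewrite ?mulrDr ?mulrN; lra.
rewrite (ler0_norm h3) in n2; rewrite mulr0.
case: (maxE0 (- (u0 + t * u1) - (b0 + t * b1))) => [[? ->]|[? ->]];
case: (maxE0 (- u0 - b0)) => [[? ->]|[? ->]]; lra.
Qed.

Lemma alg_s (R : realFieldType) (p ab a l g g1 N1 N0 H1 H0 Q : R) :
  p != 0 -> ab != 0 -> a != 0 -> N1 + N0 = a * p -> N1 = Q * (a * p) ->
  p^-1 * (((p / (2 * ab) * (1 - g1) + l + g / (2 * a)) + (p / (2 * ab) * (1 - g1) + g / (2 * a))) * N1
    + p / (2 * ab) * (-2) * H1
    + ((p / (2 * ab) * (1 - g1) + l + g / (2 * a)) - (p / (2 * ab) * (1 - g1) + g / (2 * a))) * N0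
    + (- (p / (2 * ab) * (-2))) * H0)
  = (N1 - H1 + H0) / ab + l * a + g * Q - g1 * N1 / ab.
Proof.
move=> p0 ab0 a0 hN hQ.
have eQ : Q = N1 / (a * p) by rewrite hQ mulfK // mulf_neq0.
have eN0 : N0 = a * p - N1 by rewrite -hN addrC addKr.
rewrite eQ eN0; field.
by rewrite p0 ab0 a0.
Qed.

Lemma mset_of_bool d (T : measurableType d) (f : T -> bool) :
  measurable_fun setT f -> measurable [set x | f x].
Proof. move=> mf; have := mf measurableT [set true] I; rewrite setTI; exact. Qed.

Lemma mf_aff (R : realType) (a c : R) : measurable_fun setT (fun t : R => a * t + c).
Proof. by apply: measurable_funD => //; apply: measurable_funM. Qed.

Lemma mf_abs_aff (R : realType) (a c e : R) :
  measurable_fun setT (fun t : R => `|a * t + c| - e).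
Proof.
apply: measurable_funB => //.
exact: (measurableT_comp (@normr_measurable R setT) (mf_aff a c)).
Qed.

Lemma mf_maxpos (R : realType) (a c e : R) :
  measurable_fun setT (fun t : R => Num.max (`|a * t + c| - e) 0).
Proof. by apply: measurable_maxr => //; exact: mf_abs_aff. Qed.

Lemma indicT {T : Type} {R : realType} (A : set T) w : A w -> \1_A w = 1 :> R.
Proof. by move=> h; rewrite indicE mem_set. Qed.
Lemma indicF {T : Type} {R : realType} (A : set T) w : ~ A w -> \1_A w = 0 :> R.
Proof. by move=> h; rewrite indicE; rewrite (_ : w \in A = false) //; apply/negbTE/negP => /set_mem. Qed.

Section Main.
Context (R : realType) (d K : nat)
  (d0 : measure_display) (Omega : measurableType d0) (P : probability Omega R)
  (X : Omega -> 'rV[R]_d) (S : Omega -> 'I_K) (Y : Omega -> bool)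
  (eta : 'rV[R]_d -> 'I_K -> R) (alpha : 'I_K -> R).
Hypothesis mX : forall A, borelRd A -> measurable (X @^-1` A).
Hypothesis mS : forall s : 'I_K, measurable (S @^-1` [set s]).
Hypothesis mY : measurable (Y @^-1` [set true]).
Hypothesis ps_gt0 : forall s : 'I_K, 0 < p_of P S s.
Hypothesis alpha_range : forall s : 'I_K, 0 < alpha s <= 1.
Hypothesis eta01 : forall x s, 0 <= eta x s <= 1.
Hypothesis eta_meas : forall (s : 'I_K) (B : set R), measurable B ->
     borelRd [set x | B (eta x s)].
Hypothesis eta_cond : forall (s : 'I_K) (A : set 'rV[R]_d), borelRd A ->
     (\int[P]_(w in [set w | A (X w) /\ S w = s]) ((Y w)%:R)%:E =
      \int[P]_(w in [set w | A (X w) /\ S w = s]) (eta (X w) (S w))%:E)%E.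
Context (lamstar gamstar : 'I_K -> R).
Hypothesis hmin : forall lam gam : 'I_K -> R,
     (dual_objective P X S eta alpha lamstar gamstar
      <= dual_objective P X S eta alpha lam gam)%E.
Hypothesis assump1 : forall (s : 'I_K) (t : R),
     P [set w | S w = s /\ eta (X w) (S w) = t] = 0%E.

Let p s := p_of P S s.
Let ab := alphabar P S alpha.
Let Es s := [set w | S w = s].

Lemma mEs s : measurable (Es s). Proof. exact: mS. Qed.

Lemma mset_eta s (B : set R) : measurable B -> measurable [set w | B (eta (X w) s)].
Proof. by move=> mB; exact: (mX (eta_meas s mB)). Qed.

Lemma mfun_eta s : measurable_fun setT (fun w => eta (X w) s).
Proof. by move=> _ B mB; rewrite setTI; exact: mset_eta. Qed.

Lemma BM_eta s : BM (fun w => eta (X w) s).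
Proof.
split; first exact: mfun_eta.
by exists 1 => w; have /andP[h0 h1] := eta01 (X w) s; rewrite ger0_norm.
Qed.

Lemma indicI_mul (A B : set Omega) w : \1_A w * \1_B w = \1_(A `&` B) w :> R.
Proof. by rewrite !indicE in_setI; case: (w \in A); case: (w \in B); rewrite ?mulr0 ?mulr1. Qed.

Lemma prob_split (A : set Omega) : measurable A ->
  prob P A = \sum_(s < K) prob P (Es s `&` A).
Proof.
move=> mA; rewrite -Ex_indic //.
rewrite (_ : \1_A = fun w => \sum_(s < K) \1_(Es s `&` A) w).
  by rewrite Ex_sum; [apply: eq_bigr => s _; rewrite Ex_indic //; exact: measurableI (mEs s) mA
                     | move=> s; apply: BM_indic; exact: measurableI (mEs s) mA].
apply/funext => w; rewrite (bigD1 (S w)) //= big1 ?addr0.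
  by rewrite !indicE in_setI; rewrite (_ : w \in Es (S w)) //; apply/mem_set.
move=> i /negPf hi; rewrite indicE in_setI; rewrite (_ : w \in Es i = false) //.
apply/negbTE/negP => /set_mem hw; by rewrite /Es /= in hw; rewrite hw eqxx in hi.
Qed.

Lemma p_Ex s : p s = Ex P (\1_(Es s)).
Proof. by rewrite Ex_indic //; exact: mEs. Qed.

Lemma alpha_gt0 s : 0 < alpha s. Proof. by case/andP: (alpha_range s). Qed.

Lemma ab_gt0 : 0 < ab.
Proof.
have [w _] : exists w : Omega, True.
  case: (pselect (exists w : Omega, True)) => // hw.
  have : P setT = 0%E.
    by rewrite (_ : setT = set0) ?measure0 //; apply/seteqP; split => // w _; apply: hw; exists w.
  by rewrite probability_setT => /eqP; rewrite onee_eq0.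
rewrite /ab /alphabar (bigD1 (S w)) //=.
apply: ltr_pwDl; first by apply: mulr_gt0; [exact: ps_gt0|exact: alpha_gt0].
by apply: sumr_ge0 => i _; apply: mulr_ge0; [exact/ltW/ps_gt0|exact/ltW/alpha_gt0].
Qed.


Lemma prob_U2 (A B : set Omega) : measurable A -> measurable B ->
  (forall w, A w -> B w -> False) -> prob P (A `|` B) = prob P A + prob P B.
Proof.
move=> mA mB dAB; rewrite -!Ex_indic //; last exact: measurableU.
rewrite -ExD; try exact: BM_indic.
congr Ex; apply/funext => w.
have [hA|hA] := pselect (A w); have [hB|hB] := pselect (B w).
- by case: (dAB w hA hB).
- have hU : (A `|` B) w by left.
  by rewrite (indicT hU) (indicT hA) (indicF hB) addr0.
- have hU : (A `|` B) w by right.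
  by rewrite (indicT hU) (indicT hB) (indicF hA) add0r.
- have hU : ~ (A `|` B) w by case.
  by rewrite (indicF hU) (indicF hB) (indicF hA) addr0.
Qed.

Lemma mset_slice (Q : 'I_K -> set Omega) : (forall s, measurable (Q s)) ->
  measurable [set w | Q (S w) w].
Proof.
move=> mQ; rewrite (_ : [set w | Q (S w) w] = \bigcup_(s in setT) (Es s `&` Q s)).
  by apply: fin_bigcup_measurable; [exact: finite_finset | move=> s _; exact: measurableI (mEs s) (mQ s)].
apply/seteqP; split => w /=.
  by move=> h; exists (S w) => //.
by move=> [s _ [/= <-]].
Qed.

Definition Aset (g : classifier R d K) s v := [set w | g (X w) s = v].
Lemma mAset g s v : measurable_classifier g -> measurable (Aset g s v).
Proof. by move=> hg; exact: mX (hg s v). Qed.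

Definition Nq g s v := prob P (Es s `&` Aset g s v).
Definition Hq g s v := Ex P (fun w => \1_(Es s `&` Aset g s v) w * eta (X w) s).

Lemma NR_formula g s : measurable_classifier g ->
  prob P [set w | S w = s /\ g (X w) (S w) <> None] = Nq g s (Some true) + Nq g s (Some false).
Proof.
move=> hg; rewrite /Nq -prob_U2.
- congr prob; apply/seteqP; split => w /=.
    move=> [hs]; rewrite hs; rewrite /Aset /=.
    by case: (g (X w) s) => [[]|] //= _; [left|right].
  by move=> [[hs hA]|[hs hA]]; rewrite hs; split => //; rewrite hA.
- exact: measurableI (mEs s) (mAset _ _ hg).
- exact: measurableI (mEs s) (mAset _ _ hg).
- by move=> w [_ h1] [_ h2]; move: h1 h2; rewrite /Aset /= => ->.
Qed.

Lemma ONE_formula g s :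
  prob P [set w | S w = s /\ g (X w) (S w) = Some true] = Nq g s (Some true).
Proof.
rewrite /Nq; congr prob; apply/seteqP; split => w /= [hs h]; by rewrite hs in h *.
Qed.


Let Yt := Y @^-1` [set true].

Lemma EsA g s v : Aset g s v `&` Es s = [set w | [set x | g x s = v] (X w) /\ S w = s].
Proof. by []. Qed.

Lemma probYt g s v : measurable_classifier g ->
  prob P (Es s `&` Aset g s v `&` Yt) = Hq g s v.
Proof.
move=> hg.
have mB : measurable (Es s `&` Aset g s v) by exact: measurableI (mEs s) (mAset _ _ hg).
rewrite -Ex_indic; last exact: measurableI mB mY.
have BMY : BM (fun w => ((Y w)%:R : R)).
  rewrite (_ : (fun w => _) = \1_Yt); first exact: BM_indic.
  apply/funext => w; case hY: (Y w).
    by rewrite indicT //; rewrite /Yt /preimage /= hY.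
  by rewrite indicF //; rewrite /Yt /preimage /= hY.
have mD : measurable (Aset g s v `&` Es s) by rewrite setIC.
have := eta_cond s (hg s v); rewrite -EsA.
rewrite [Z in _ = Z](eq_integral (fun w => (eta (X w) s)%:E)); last first.
  by move=> w /set_mem [_ /= ->].
rewrite !Ex_set //; try exact: BM_eta.
move=> /(congr1 fine) /= hE.
rewrite (_ : \1_(Es s `&` Aset g s v `&` Yt) = fun w => \1_(Aset g s v `&` Es s) w * (Y w)%:R).
  rewrite hE /Hq; congr Ex; apply/funext => w; congr (_ * _); by rewrite setIC.
apply/funext => w; rewrite -indicI_mul; congr (_ * _); first by rewrite setIC.
case hY: (Y w).
  by rewrite indicT //; rewrite /Yt /preimage /= hY.
by rewrite indicF //; rewrite /Yt /preimage /= hY.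
Qed.


Lemma Err_formula g : measurable_classifier g ->
  prob P [set w | g (X w) (S w) <> None /\ g (X w) (S w) <> Some (Y w)]
  = \sum_(s < K) (Nq g s (Some true) - Hq g s (Some true) + Hq g s (Some false)).
Proof.
move=> hg.
pose Q := fun s => [set w | g (X w) s <> None /\ g (X w) s <> Some (Y w)].
have eQ s : Q s = (Aset g s (Some true) `&` ~` Yt) `|` (Aset g s (Some false) `&` Yt).
  apply/seteqP; split => w; rewrite /Q /Aset /Yt /preimage /=;
  case: (g (X w) s) => [[]|]; case: (Y w) => //=; intuition congruence.
have mQ s : measurable (Q s).
  rewrite eQ; apply: measurableU; apply: measurableI; try exact: mAset;
  by [exact: measurableC | exact: mY].
rewrite (prob_split (mset_slice mQ)); apply: eq_bigr => s _.
have mB v : measurable (Es s `&` Aset g s v) by exact: measurableI (mEs s) (mAset _ _ hg).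
have -> : Es s `&` [set w | Q (S w) w] =
   (Es s `&` Aset g s (Some true) `&` ~` Yt) `|` (Es s `&` Aset g s (Some false) `&` Yt).
  apply/seteqP; split => w.
    by move=> [hs]; rewrite /= hs -/(Q s w) eQ => -[[h1 h2]|[h1 h2]]; [left|right].
  by move=> [[[hs h1] h2]|[[hs h1] h2]]; split=> //=; rewrite hs -/(Q s w) eQ; [left|right].
rewrite prob_U2; first last.
- by move=> w [[_ h1] _] [[_ h2] _]; move: h1 h2; rewrite /Aset /= => ->.
- exact: measurableI (mB _) mY.
- exact: measurableI (mB _) (measurableC mY).
rewrite probYt //; congr (_ + _).
have dis : forall w, (Es s `&` Aset g s (Some true) `&` Yt) w ->
    (Es s `&` Aset g s (Some true) `&` ~` Yt) w -> False by move=> w [_ h1] [_ h2].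
have h := prob_U2 (measurableI _ _ (mB (Some true)) mY) (measurableI _ _ (mB (Some true)) (measurableC mY)) dis.
rewrite -setIUr setUv setIT probYt // in h.
by rewrite /Nq h addrC addKr.
Qed.


Lemma NR_all g : measurable_classifier g ->
  prob P [set w | g (X w) (S w) <> None] = \sum_(s < K) (Nq g s (Some true) + Nq g s (Some false)).
Proof.
move=> hg.
have mQ s : measurable [set w | g (X w) s <> None].
  rewrite (_ : [set w | _] = ~` Aset g s None); first exact/measurableC/mAset.
  by apply/seteqP; split => w.
rewrite (prob_split (mset_slice mQ)); apply: eq_bigr => s _.
by rewrite -NR_formula //; congr prob; apply/seteqP; split => w [hs h]; split.
Qed.

Lemma ONE_all g : measurable_classifier g ->
  prob P [set w | g (X w) (S w) = Some true] = \sum_(s < K) Nq g s (Some true).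
Proof.
move=> hg.
have mQ s : measurable (Aset g s (Some true)) by exact: mAset.
rewrite (prob_split (mset_slice mQ)); apply: eq_bigr => s _.
by rewrite -ONE_formula //; congr prob; apply/seteqP; split => w [hs h]; split.
Qed.

Lemma feas_facts g : DPWA_feasible P X S alpha g ->
  (forall s, Nq g s (Some true) + Nq g s (Some false) = alpha s * p s) /\
  prob P [set w | g (X w) (S w) <> None] = ab /\
  (forall s, Nq g s (Some true) = (\sum_(j < K) Nq g j (Some true)) / ab * (alpha s * p s)).
Proof.
move=> [hg hf].
have hN s : Nq g s (Some true) + Nq g s (Some false) = alpha s * p s.
  have [hNA _] := hf s; move: hNA; rewrite /NA NR_formula // => <-.
  by rewrite divfK //; apply: lt0r_neq0; exact: ps_gt0.
have hab : prob P [set w | g (X w) (S w) <> None] = ab.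
  by rewrite NR_all //; apply: eq_bigr => s _; rewrite hN mulrC.
split => //; split => // s.
have [_ hPT] := hf s; move: hPT; rewrite /PTs /PT ONE_formula NR_formula // hN hab ONE_all //.
move=> <-; rewrite divfK //; apply: lt0r_neq0; apply: mulr_gt0; [exact: alpha_gt0 | exact: ps_gt0].
Qed.


Definition uf (gam : 'I_K -> R) s t :=
  p s / (2 * ab) * (1 - 2 * t - \sum_(j < K) gam j) + gam s / (2 * alpha s).
Definition bf (lam gam : 'I_K -> R) s :=
  p s / (2 * ab) * (1 - \sum_(j < K) gam j) + lam s + gam s / (2 * alpha s).

Lemma Gfun_ub x s lam gam :
  Gfun P S eta alpha x s lam gam = `|uf gam s (eta x s)| - bf lam gam s.
Proof. rewrite /Gfun /uf /bf /p /ab /=; ring. Qed.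

Lemma Ex_aff (B : set Omega) s c k : measurable B ->
  Ex P (fun w => \1_B w * (c + k * eta (X w) s)) =
  c * prob P B + k * Ex P (fun w => \1_B w * eta (X w) s).
Proof.
move=> mB.
have hB := BM_indic R mB.
rewrite (_ : (fun w => _) = fun w => c * \1_B w + k * (\1_B w * eta (X w) s)).
  rewrite ExD ?ExZ ?Ex_indic //; try apply: BM_mul => //; try exact: BM_cst;
  try apply: BM_mul => //; exact: BM_eta.
by apply/funext => w; ring.
Qed.

Definition F0 s w := Num.max (Gfun P S eta alpha (X w) s lamstar gamstar) 0.
Definition u0 s w := uf gamstar s (eta (X w) s).
Definition b0 s := bf lamstar gamstar s.
Definition Phi (g : classifier R d K) s w :=
  \1_(Aset g s (Some true)) w * (b0 s + u0 s w) +
  \1_(Aset g s (Some false)) w * (b0 s - u0 s w) + F0 s w.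
Definition LHS g := \sum_(s < K) (p s)^-1 * Ex P (fun w => \1_(Es s) w * Phi g s w).

Lemma Phi_ge0 g s w : 0 <= Phi g s w.
Proof.
rewrite /Phi /F0 Gfun_ub -/(u0 s w) -/(b0 s).
have [[h1 e1]|[h1 e1]] := maxE0 (`|u0 s w| - b0 s); rewrite e1;
case E: (g (X w) s) => [[]|].
- rewrite (indicT (A := Aset g s (Some true))) // (indicF (A := Aset g s (Some false))); last by rewrite /Aset /= E.
  have := nbnd (u0 s w); lra.
- rewrite (indicF (A := Aset g s (Some true))) ?(indicT (A := Aset g s (Some false))) //; last by rewrite /Aset /= E.
  have := nbnd (u0 s w); lra.
- rewrite (indicF (A := Aset g s (Some true))) ?(indicF (A := Aset g s (Some false))) /Aset /= ?E //; lra.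
- rewrite (indicT (A := Aset g s (Some true))) // (indicF (A := Aset g s (Some false))); last by rewrite /Aset /= E.
  have := nbnd (u0 s w); lra.
- rewrite (indicF (A := Aset g s (Some true))) ?(indicT (A := Aset g s (Some false))) //; last by rewrite /Aset /= E.
  have := nbnd (u0 s w); lra.
- rewrite (indicF (A := Aset g s (Some true))) ?(indicF (A := Aset g s (Some false))) /Aset /= ?E //; lra.
Qed.


Definition kk2 s := p s / (2 * ab) * (-2).
Definition kk1 (gam : 'I_K -> R) s := p s / (2 * ab) * (1 - \sum_(j < K) gam j) + gam s / (2 * alpha s).
Lemma uf_lin gam s t : uf gam s t = kk2 s * t + kk1 gam s.
Proof. rewrite /uf /kk2 /kk1; ring. Qed.

Lemma BM_maxpos s a c e : BM (fun w => Num.max (`|a * eta (X w) s + c| - e) 0).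
Proof.
split; first exact: (measurableT_comp (mf_maxpos a c e) (mfun_eta s)).
exists (`|a| + `|c| + `|e|) => w.
have /andP[t0 t1] := eta01 (X w) s.
have n1 := ler_normD (a * eta (X w) s) c.
rewrite normrM (ger0_norm t0) in n1.
have n2 : `|a| * eta (X w) s <= `|a| by rewrite ler_piMr.
have [n3 n4] := nbnd e.
have na := normr_ge0 a; have nc := normr_ge0 c; have ne := normr_ge0 e.
have [[h1 ->]|[h1 ->]] := maxE0 (`|a * eta (X w) s + c| - e).
  rewrite ger0_norm //; lra.
rewrite normr0; lra.
Qed.

Lemma F_shape lam gam s :
  (fun w => Num.max (Gfun P S eta alpha (X w) s lam gam) 0) =
  (fun w => Num.max (`|kk2 s * eta (X w) s + kk1 gam s| - bf lam gam s) 0).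
Proof. by apply/funext => w; rewrite Gfun_ub uf_lin. Qed.

Lemma BM_F lam gam s : BM (fun w => Num.max (Gfun P S eta alpha (X w) s lam gam) 0).
Proof. rewrite F_shape; exact: BM_maxpos. Qed.

Lemma LHS_formula g : measurable_classifier g ->
  LHS g = \sum_(s < K) (p s)^-1 * ((b0 s + kk1 gamstar s) * Nq g s (Some true)
        + kk2 s * Hq g s (Some true) + (b0 s - kk1 gamstar s) * Nq g s (Some false)
        + (- kk2 s) * Hq g s (Some false))
   + \sum_(s < K) (p s)^-1 * Ex P (fun w => \1_(Es s) w * F0 s w).
Proof.
move=> hg; rewrite /LHS -big_split /=; apply: eq_bigr => s _.
rewrite -mulrDr; congr (_ * _).
have mB v : measurable (Es s `&` Aset g s v) by exact: measurableI (mEs s) (mAset _ _ hg).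
have BF0 : BM (F0 s) by exact: BM_F.
rewrite (_ : (fun w => _) = fun w =>
   \1_(Es s `&` Aset g s (Some true)) w * ((b0 s + kk1 gamstar s) + kk2 s * eta (X w) s) +
   \1_(Es s `&` Aset g s (Some false)) w * ((b0 s - kk1 gamstar s) + (- kk2 s) * eta (X w) s) +
   \1_(Es s) w * F0 s w); last first.
  apply/funext => w; rewrite /Phi /u0 uf_lin -!indicI_mul; ring.
have BE : forall B c k, measurable B -> BM (fun w => \1_B w * (c + k * eta (X w) s)).
  move=> B c k mB'; apply: BM_mul; first exact: BM_indic.
  apply: BM_add; first exact: BM_cst.
  apply: BM_mul; [exact: BM_cst | exact: BM_eta].
rewrite !ExD; try apply: BE => //; try apply: BM_add; try apply: BE => //;
  try (apply: BM_mul => //; exact: BM_indic (mEs s)).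
by rewrite !Ex_aff // /Nq /Hq !addrA.
Qed.


Definition FF := \sum_(s < K) (p s)^-1 * Ex P (fun w => \1_(Es s) w * F0 s w).

Lemma LHS_feas g : DPWA_feasible P X S alpha g ->
  LHS g = risk P X S Y g + \sum_(s < K) lamstar s * alpha s + FF.
Proof.
move=> hf; have [hg _] := hf; have [hN [hab hQ]] := feas_facts hf.
set Q := (\sum_(j < K) Nq g j (Some true)) / ab.
rewrite LHS_formula //; congr (_ + _).
rewrite (eq_bigr (fun s => (Nq g s (Some true) - Hq g s (Some true) + Hq g s (Some false)) / ab
   + lamstar s * alpha s + gamstar s * Q - (\sum_(j < K) gamstar j) * Nq g s (Some true) / ab)); last first.
  move=> s _; rewrite /b0 /bf /kk1 /kk2; apply: alg_s => //.
  - exact: lt0r_neq0 (ps_gt0 s).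
  - exact: lt0r_neq0 ab_gt0.
  - exact: lt0r_neq0 (alpha_gt0 s).
rewrite /risk Err_formula //. have -> : prob P [set w | g (X w) (S w) <> None] = ab by exact: hab.
set E := \sum_(s < K) (Nq g s (Some true) - Hq g s (Some true) + Hq g s (Some false)).
rewrite sumrB !big_split /= -!mulr_suml -mulr_sumr /Q.
rewrite -/E; ring.
Qed.

Definition tau s := 1 / 2 + c_gam P S alpha gamstar s.
Lemma uf_tau s t : uf gamstar s t = 2 * (p s / (2 * ab)) * (tau s - t).
Proof.
rewrite /uf /tau /c_gam /p /ab; field.
have h1 := lt0r_neq0 (ps_gt0 s); have h2 := lt0r_neq0 ab_gt0; have h3 := lt0r_neq0 (alpha_gt0 s).
by rewrite /p /ab in h1 h2; rewrite h1 h2 h3.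
Qed.

Lemma uf_le0 s t : (uf gamstar s t <= 0) = (tau s <= t).
Proof.
rewrite uf_tau pmulr_rle0 ?subr_le0 //.
apply: mulr_gt0 => //; apply: divr_gt0; first exact: ps_gt0.
by apply: mulr_gt0 => //; exact: ab_gt0.
Qed.

Let gs := gstar P S eta alpha lamstar gamstar.

Lemma Phi_star s w : Phi gs s w = 0.
Proof.
rewrite /Phi /F0.
have E : gs (X w) s = if Gfun P S eta alpha (X w) s lamstar gamstar <= 0 then None
   else Some (tau s <= eta (X w) s) by [].
rewrite Gfun_ub -/(u0 s w) -/(b0 s) in E *.
case hG: (`|u0 s w| - b0 s <= 0) in E.
  rewrite (indicF (A := Aset gs s (Some true))) ?(indicF (A := Aset gs s (Some false))) /Aset /= ?E //.
  have [[h1 ->]|[h1 ->]] := maxE0 (`|u0 s w| - b0 s); lra.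
have h1 : 0 < `|u0 s w| - b0 s by rewrite ltNge hG.
rewrite (_ : Num.max _ 0 = `|u0 s w| - b0 s); last by apply/max_idPl/ltW.
case: (lerP (tau s) (eta (X w) s)) E => ht E.
  rewrite (indicT (A := Aset gs s (Some true))) // (indicF (A := Aset gs s (Some false))); last by rewrite /Aset /= E.
  have : u0 s w <= 0 by rewrite /u0 uf_le0.
  move=> hu; rewrite (ler0_norm hu); ring.
rewrite (indicF (A := Aset gs s (Some true))) ?(indicT (A := Aset gs s (Some false))) //; last by rewrite /Aset /= E.
have : 0 < u0 s w by rewrite ltNge /u0 uf_le0 -ltNge.
move=> hu; rewrite (gtr0_norm hu); ring.
Qed.


Lemma LHS_ge0 g : 0 <= LHS g.
Proof.
apply: sumr_ge0 => s _; apply: mulr_ge0; first by rewrite invr_ge0; exact/ltW/ps_gt0.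
apply: Ex_ge0 => w; apply: mulr_ge0; last exact: Phi_ge0.
by rewrite indicE ler0n.
Qed.

Lemma LHS_star : LHS gs = 0.
Proof.
apply: big1 => s _.
rewrite (_ : (fun w => _) = fun _ => 0); last by apply/funext => w; rewrite Phi_star mulr0.
by rewrite /Ex Rintegral_cst // mul0r mulr0.
Qed.

Lemma optimal g : DPWA_feasible P X S alpha g -> DPWA_feasible P X S alpha gs ->
  risk P X S Y gs <= risk P X S Y g.
Proof.
move=> hg hs.
have e1 := LHS_feas hg; have e2 := LHS_feas hs.
have h1 := LHS_ge0 g; have h2 := LHS_star.
lra.
Qed.


Lemma mR_bool (b : R -> bool) : measurable_fun setT b -> measurable [set t | b t].
Proof. exact: mset_of_bool. Qed.

Lemma mf_absuf gam s : measurable_fun setT (fun t => `|uf gam s t|).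
Proof.
rewrite (_ : (fun t => _) = fun t => `|kk2 s * t + kk1 gam s| - 0).
  exact: mf_abs_aff.
by apply/funext => t; rewrite uf_lin subr0.
Qed.

Lemma mf_Guf lam gam s : measurable_fun setT (fun t => `|uf gam s t| - bf lam gam s).
Proof.
rewrite (_ : (fun t => _) = fun t => `|kk2 s * t + kk1 gam s| - bf lam gam s).
  exact: mf_abs_aff.
by apply/funext => t; rewrite uf_lin.
Qed.

Lemma msr_gs : measurable_classifier gs.
Proof.
move=> s v.
pose f := fun t => `|uf gamstar s t| - b0 s.
have mf : measurable_fun setT f by exact: mf_Guf.
have hle : measurable_fun setT (fun t => f t <= 0) by apply: measurable_fun_ler.
have hlt : measurable_fun setT (fun t => 0 < f t) by apply: measurable_fun_ltr.
have htau1 : measurable_fun setT (fun t : R => tau s <= t) by apply: measurable_fun_ler.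
have htau2 : measurable_fun setT (fun t : R => t < tau s) by apply: measurable_fun_ltr.
have E x : gs x s = if f (eta x s) <= 0 then None else Some (tau s <= eta x s).
  by rewrite /gs /gstar Gfun_ub.
case: v => [[]|].
- rewrite (_ : [set x | gs x s = Some true] = [set x | [set t | (0 < f t) && (tau s <= t)] (eta x s)]).
    by apply: eta_meas; apply: mR_bool; exact: measurable_and.
  apply/seteqP; split => x /=; rewrite E.
    by case: ifP => // h [] ->; rewrite andbT ltNge h.
  by move=> /andP[h1 h2]; rewrite leNgt h1 /= h2.
- rewrite (_ : [set x | gs x s = Some false] = [set x | [set t | (0 < f t) && (t < tau s)] (eta x s)]).
    by apply: eta_meas; apply: mR_bool; exact: measurable_and.
  apply/seteqP; split => x /=; rewrite E.
    by case: ifP => // h [] /negbT; rewrite -ltNge => ->; rewrite andbT ltNge h.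
  by move=> /andP[h1 h2]; rewrite leNgt h1 /= leNgt h2.
- rewrite (_ : [set x | gs x s = None] = [set x | [set t | f t <= 0] (eta x s)]).
    by apply: eta_meas; exact: mR_bool.
  apply/seteqP; split => x /=; rewrite E.
    by case: ifP.
  by move=> ->.
Qed.

Lemma dual_real lam gam : dual_objective P X S eta alpha lam gam =
  (\sum_(s < K) lam s * alpha s + \sum_(s < K) (p s)^-1 *
     Ex P (fun w => \1_(Es s) w * Num.max (Gfun P S eta alpha (X w) s lam gam) 0))%:E.
Proof.
rewrite /dual_objective EFinD; congr (_ + _)%E.
rewrite -sumEFin; apply: eq_bigr => s _.
by rewrite (Ex_set _ (mEs s) (BM_F lam gam s)) EFinM.
Qed.


Definition u1 (dg : 'I_K -> R) s := p s / (2 * ab) * (- \sum_(j < K) dg j) + dg s / (2 * alpha s).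
Definition b1 (dl dg : 'I_K -> R) s :=
  p s / (2 * ab) * (- \sum_(j < K) dg j) + dl s + dg s / (2 * alpha s).
Definition Ld dl dg s := `|u1 dg s| + `|b1 dl dg s|.
Definition Bad dl dg s t := [set w | (`|u0 s w| <= t * Ld dl dg s) ||
   (`| `|u0 s w| - b0 s| <= t * Ld dl dg s)].
Definition A1 s := Aset gs s (Some true).
Definition A0 s := Aset gs s (Some false).

Lemma uf_shift dg t s x : uf (fun i => gamstar i + t * dg i) s x = uf gamstar s x + t * u1 dg s.
Proof. rewrite /uf /u1 big_split /= -mulr_sumr; ring. Qed.

Lemma bf_shift dl dg t s :
  bf (fun i => lamstar i + t * dl i) (fun i => gamstar i + t * dg i) s = b0 s + t * b1 dl dg s.
Proof. rewrite /b0 /bf /b1 big_split /= -mulr_sumr; ring. Qed.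

Lemma pt_bound dl dg t s w : 0 <= t ->
  Num.max (Gfun P S eta alpha (X w) s (fun i => lamstar i + t * dl i)
                (fun i => gamstar i + t * dg i)) 0 - F0 s w
  <= t * (- dl s * (\1_(A1 s) w + \1_(A0 s) w) - 2 * u1 dg s * \1_(A1 s) w)
     + 2 * t * Ld dl dg s * \1_(Bad dl dg s t) w.
Proof.
move=> t0.
rewrite Gfun_ub uf_shift bf_shift /F0 Gfun_ub -/(u0 s w) -/(b0 s).
apply: le_trans (pw (u0 s w) (u1 dg s) (b0 s) (b1 dl dg s) t0) _.
have E : gs (X w) s = if `|u0 s w| - b0 s <= 0 then None
   else Some (tau s <= eta (X w) s) by rewrite /gs /gstar Gfun_ub.
apply: lerD.
  case hG: (`|u0 s w| - b0 s <= 0) in E.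
    rewrite ltNge hG /= mulr0 (indicF (A := A1 s)) ?(indicF (A := A0 s)) /A1 /A0 /Aset /= ?E //.
    by rewrite !mulr0 addr0 mulr0 subrr mulr0.
  rewrite ltNge hG /=.
  case: (lerP (tau s) (eta (X w) s)) E => ht E.
    have hu : u0 s w <= 0 by rewrite /u0 uf_le0.
    rewrite hu (indicT (A := A1 s)) ?(indicF (A := A0 s)) /A1 /A0 /Aset /= ?E //.
    rewrite le_eqVlt; apply/orP; left; apply/eqP; rewrite /b1 /u1; ring.
  have hu : (u0 s w <= 0) = false by rewrite /u0 uf_le0; apply/negbTE; rewrite -ltNge.
  rewrite hu (indicF (A := A1 s)) ?(indicT (A := A0 s)) /A1 /A0 /Aset /= ?E //.
  rewrite le_eqVlt; apply/orP; left; apply/eqP; rewrite /b1 /u1; ring.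
case hb: (_ || _).
  by rewrite indicT ?mulr1 // /Bad /= hb.
by rewrite indicF ?mulr0 // /Bad /= hb.
Qed.


Definition N1 s := Nq gs s (Some true).
Definition N0 s := Nq gs s (Some false).
Definition Mdir dl dg := \sum_(s < K) dl s * alpha s +
  \sum_(s < K) (p s)^-1 * (- dl s * (N1 s + N0 s) - 2 * u1 dg s * N1 s).

Lemma mBad dl dg s t : measurable (Bad dl dg s t).
Proof.
apply: (mset_eta s (B := [set x | (`|uf gamstar s x| <= t * Ld dl dg s) ||
   (`| `|uf gamstar s x| - b0 s| <= t * Ld dl dg s)])).
apply: mR_bool; apply: measurable_or; apply: measurable_fun_ler => //.
  exact: mf_absuf.
exact: (measurableT_comp (@normr_measurable R setT) (mf_Guf lamstar gamstar s)).
Qed.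

Lemma mA1 s : measurable (A1 s). Proof. exact: mAset msr_gs. Qed.
Lemma mA0 s : measurable (A0 s). Proof. exact: mAset msr_gs. Qed.

Lemma key_s dl dg t s : 0 <= t ->
  Ex P (fun w => \1_(Es s) w * Num.max (Gfun P S eta alpha (X w) s (fun i => lamstar i + t * dl i)
                (fun i => gamstar i + t * dg i)) 0) - Ex P (fun w => \1_(Es s) w * F0 s w) <=
  t * (- dl s * (N1 s + N0 s) - 2 * u1 dg s * N1 s) + 2 * t * Ld dl dg s * prob P (Es s `&` Bad dl dg s t).
Proof.
move=> t0.
have mE := mEs s.
have m1 : measurable (Es s `&` A1 s) by exact: measurableI mE (mA1 s).
have m0 : measurable (Es s `&` A0 s) by exact: measurableI mE (mA0 s).
have mb : measurable (Es s `&` Bad dl dg s t) by exact: measurableI mE (mBad dl dg s t).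
have bE := BM_indic R mE.
rewrite -ExB; try (apply: BM_mul => //; exact: BM_F).
have BI : forall (c : R) (B : set Omega), measurable B -> BM (fun w => c * \1_B w).
  by move=> c B mB; exact: (BM_mul (BM_cst Omega c) (BM_indic R mB)).
apply: (le_trans (@Ex_le _ _ _ P _ (fun w => (t * (- dl s)) * \1_(Es s `&` A1 s) w
    + (t * (- dl s)) * \1_(Es s `&` A0 s) w + (- (t * 2 * u1 dg s)) * \1_(Es s `&` A1 s) w
    + (2 * t * Ld dl dg s) * \1_(Es s `&` Bad dl dg s t) w) _ _ _)).
- by apply: BM_sub; apply: BM_mul => //; exact: BM_F.
- by repeat first [apply: BI | apply: BM_add].
- move=> w; rewrite -!indicI_mul.
  have := pt_bound dl dg s w t0.
  rewrite /A1 /A0; have [hE|hE] := pselect (Es s w); [rewrite (indicT hE) | rewrite (indicF hE)]; rewrite ?mul1r ?mul0r ?mulr0 ?addr0 ?subr0 => h //.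
  apply: le_trans h _; rewrite le_eqVlt; apply/orP; left; apply/eqP; ring.
rewrite !ExD; try (by repeat first [apply: BI | apply: BM_add]).
rewrite !ExZ; try exact: BM_indic.
rewrite !Ex_indic // /N1 /N0 /Nq -/(A1 s) -/(A0 s).
rewrite le_eqVlt; apply/orP; left; apply/eqP; ring.
Qed.


Lemma dir_ineq dl dg t : 0 < t ->
  0 <= Mdir dl dg + 2 * \sum_(s < K) (p s)^-1 * Ld dl dg s * prob P (Es s `&` Bad dl dg s t).
Proof.
move=> tp; have t0 := ltW tp.
have h := hmin (fun i => lamstar i + t * dl i) (fun i => gamstar i + t * dg i).
rewrite !dual_real lee_fin in h.
set Et := fun s => Ex P (fun w => \1_(Es s) w * Num.max (Gfun P S eta alpha (X w) s
     (fun i => lamstar i + t * dl i) (fun i => gamstar i + t * dg i)) 0).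
set E0 := fun s => Ex P (fun w => \1_(Es s) w * Num.max (Gfun P S eta alpha (X w) s lamstar gamstar) 0).
set As := fun s => - dl s * (N1 s + N0 s) - 2 * u1 dg s * N1 s.
set rs := fun s => prob P (Es s `&` Bad dl dg s t).
have hsum : \sum_(s < K) (p s)^-1 * Et s - \sum_(s < K) (p s)^-1 * E0 s <=
    t * \sum_(s < K) (p s)^-1 * As s + t * (2 * \sum_(s < K) (p s)^-1 * Ld dl dg s * rs s).
  rewrite -sumrB !mulr_sumr -big_split /=; apply: ler_sum => s _.
  rewrite -mulrBr.
  have pi : 0 <= (p s)^-1 by rewrite invr_ge0; exact/ltW/ps_gt0.
  apply: le_trans (ler_wpM2l pi (key_s dl dg s t0)) _.
  rewrite le_eqVlt; apply/orP; left; apply/eqP; rewrite /As /rs; ring.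
have hl : \sum_(s < K) (lamstar s + t * dl s) * alpha s =
    \sum_(s < K) lamstar s * alpha s + t * \sum_(s < K) dl s * alpha s.
  rewrite mulr_sumr -big_split /=; apply: eq_bigr => s _; ring.
rewrite hl in h.
have : 0 <= t * (Mdir dl dg + 2 * \sum_(s < K) (p s)^-1 * Ld dl dg s * rs s).
  rewrite /Mdir -/As mulrDr mulrDr; lra.
by rewrite pmulr_rge0.
Qed.


Lemma meas_lim (F : nat -> set Omega) : (forall n, measurable (F n)) ->
  (forall n m, (n <= m)%N -> F m `<=` F n) -> P (\bigcap_n F n) = 0%E ->
  forall eps, 0 < eps -> exists N, forall n, (N <= n)%N -> prob P (F n) <= eps.
Proof.
move=> mF hdec h0 eps ep.
have hc := @nonincreasing_cvg_mu _ _ _ P F (le_lt_trans (probability_le1 P (mF 0%N)) (ltry _))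
  mF (bigcapT_measurable mF) (fun n m nm => introT (subsetPset _ _) (hdec n m nm)).
move: hc; set Z := (Q in _ --> Q); have -> : Z = 0%E by exact: h0. move=> hc.
move/fine_cvgP: hc => [_ hc].
move/cvgrPdist_lt: hc => /(_ eps ep) [N _ hN].
exists N => n nN; have := hN n nN; rewrite /= sub0r normrN => /ltW.
by apply: le_trans; exact: ler_norm.
Qed.

Lemma inv_small (L m : R) : 0 <= L -> 0 < m -> exists n : nat, (n.+1%:R)^-1 * L < m.
Proof.
move=> L0 m0; exists (Num.Def.archi_bound (L / m)).
have h := archi_boundP (divr_ge0 L0 (ltW m0)).
rewrite mulrC ltr_pdivrMr //.
rewrite ltr_pdivrMr // in h.
apply: lt_le_trans h _; rewrite mulrC ler_wpM2l ?(ltW m0) //.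
by rewrite ler_nat.
Qed.


Definition Zs s := [set w | (u0 s w == 0) || (`|u0 s w| == b0 s)].

Lemma null_Z s : P (Es s `&` Zs s) = 0%E.
Proof.
set c := 2 * (p s / (2 * ab)).
have c0 : 0 < c.
  by apply: mulr_gt0 => //; apply: divr_gt0; [exact: ps_gt0 | apply: mulr_gt0 => //; exact: ab_gt0].
pose Zk k := [set w | S w = s /\ eta (X w) (S w) = k].
have eZk k : Zk k = Es s `&` [set w | [set t : R | t = k] (eta (X w) s)].
  by apply/seteqP; split => w [hs h]; split => //=; rewrite ?hs // -hs.
have mZk k : measurable (Zk k).
  by rewrite eZk; apply: measurableI (mEs s) (mset_eta s (measurable_set1 k)).
have nZk k : P (Zk k) = 0%E := assump1 s k.
have mZ : measurable (Es s `&` Zs s).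
  apply: measurableI (mEs s) _.
  apply: (mset_eta s (B := [set t | (uf gamstar s t == 0) || (`|uf gamstar s t| == b0 s)])).
  apply: mR_bool; apply: measurable_or; apply: measurable_fun_eqr => //.
    by rewrite (_ : uf gamstar s = fun t => kk2 s * t + kk1 gamstar s);
      [exact: mf_aff | apply/funext => t; exact: uf_lin].
  exact: mf_absuf.
have sub : Es s `&` Zs s `<=` Zk (tau s) `|` Zk (tau s - b0 s / c) `|` Zk (tau s + b0 s / c).
  move=> w [hs hz]; have hs' : S w = s by [].
  have hu : u0 s w = c * (tau s - eta (X w) s) by rewrite /u0 uf_tau.
  case/orP: hz => /eqP h.
    left; left; split => //; rewrite hs'.
    move: h; rewrite hu => /eqP; rewrite mulf_eq0 (negbTE (lt0r_neq0 c0)) /= subr_eq0 => /eqP.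
    by move=> ->.
  have [hp|hn] := lerP 0 (tau s - eta (X w) s).
    left; right; split => //; rewrite hs'.
    rewrite hu normrM (ger0_norm (ltW c0)) (ger0_norm hp) in h.
    by rewrite -h; field; exact: lt0r_neq0 c0.
  right; split => //; rewrite hs'.
  rewrite hu normrM (ger0_norm (ltW c0)) (ltr0_norm hn) in h.
  by rewrite -h; field; exact: lt0r_neq0 c0.
have mU12 : measurable (Zk (tau s) `|` Zk (tau s - b0 s / c)) by exact: measurableU.
have mU : measurable (Zk (tau s) `|` Zk (tau s - b0 s / c) `|` Zk (tau s + b0 s / c)) by exact: measurableU.
apply/eqP; rewrite eq_le measure_ge0 andbT.
apply: le_trans (le_measure P (mem_set mZ) (mem_set mU) sub) _.
apply: le_trans (measureU2 P mU12 (mZk _)) _.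
rewrite [Q in (_ + Q)%E](_ : _ = 0%E); last exact: nZk.
rewrite adde0; apply: le_trans (measureU2 P (mZk _) (mZk _)) _.
rewrite [Q in (_ + Q)%E](_ : _ = 0%E); last exact: nZk.
rewrite [Q in (Q + _)%E](_ : _ = 0%E); last exact: nZk.
by rewrite adde0.
Qed.


Lemma tn_dec (n m : nat) : (n <= m)%N -> (m.+1%:R : R)^-1 <= (n.+1%:R)^-1.
Proof. by move=> h; rewrite lef_pV2 ?posrE ?ltr0Sn // ler_nat ltnS. Qed.

Lemma Fs_props dl dg s :
  (forall n, measurable (Es s `&` Bad dl dg s (n.+1%:R^-1))) /\
  (forall n m, (n <= m)%N -> Es s `&` Bad dl dg s (m.+1%:R^-1) `<=` Es s `&` Bad dl dg s (n.+1%:R^-1)) /\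
  P (\bigcap_n (Es s `&` Bad dl dg s (n.+1%:R^-1))) = 0%E.
Proof.
have L0 : 0 <= Ld dl dg s by apply: addr_ge0.
have mF n : measurable (Es s `&` Bad dl dg s (n.+1%:R^-1)) by exact: measurableI (mEs s) (mBad _ _ _ _).
split => //; split.
  move=> n m nm w [hs hb]; split => //; move: hb; rewrite /Bad /=.
  have ht : (m.+1%:R : R)^-1 * Ld dl dg s <= (n.+1%:R)^-1 * Ld dl dg s by apply: ler_wpM2r => //; exact: tn_dec.
  by case/orP => h; apply/orP; [left|right]; exact: le_trans h ht.
have mZ : measurable (Es s `&` Zs s).
  apply: measurableI (mEs s) _.
  apply: (mset_eta s (B := [set t | (uf gamstar s t == 0) || (`|uf gamstar s t| == b0 s)])).
  apply: mR_bool; apply: measurable_or; apply: measurable_fun_eqr => //.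
    by rewrite (_ : uf gamstar s = fun t => kk2 s * t + kk1 gamstar s);
      [exact: mf_aff | apply/funext => t; exact: uf_lin].
  exact: mf_absuf.
have sub : \bigcap_n (Es s `&` Bad dl dg s (n.+1%:R^-1)) `<=` Es s `&` Zs s.
  move=> w hw; have [hs _] := hw 0%N I; split => //.
  apply/negPn/negP; rewrite negb_or => /andP[h1 h2].
  have x0 : 0 < `|u0 s w| by rewrite normr_gt0.
  have y0 : 0 < `| `|u0 s w| - b0 s| by rewrite normr_gt0 subr_eq0.
  set m := Num.min `|u0 s w| `| `|u0 s w| - b0 s|.
  have m0 : 0 < m by rewrite lt_min x0 y0.
  have := lexx m; rewrite {2}/m le_min => /andP[mx my].
  have [n hn] := inv_small L0 m0.
  have [_ hb] := hw n I; move: hb; rewrite /Bad /= => /orP[] h.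
    by have := le_lt_trans h hn; rewrite ltNge mx.
  by have := le_lt_trans h hn; rewrite ltNge my.
apply/eqP; rewrite eq_le measure_ge0 andbT.
apply: le_trans (le_measure P (mem_set (bigcapT_measurable mF)) (mem_set mZ) sub) _.
by rewrite [Q in (Q <= _)%E](_ : _ = 0%E) //; exact: null_Z.
Qed.

Lemma Mdir_ge0 dl dg : 0 <= Mdir dl dg.
Proof.
set C := \sum_(s < K) (p s)^-1 * Ld dl dg s.
have C0 : 0 <= C.
  apply: sumr_ge0 => s _; apply: mulr_ge0; last by apply: addr_ge0.
  by rewrite invr_ge0; exact/ltW/ps_gt0.
apply/ler_addgt0Pr => e e0.
set eps := e / (2 * C + 1).
have C1 : 0 < 2 * C + 1 by lra.
have eps0 : 0 < eps by apply: divr_gt0.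
have he : eps * (2 * C + 1) = e by rewrite /eps divfK // lt0r_neq0.
have hN : forall s : 'I_K, exists N : nat, forall n, (N <= n)%N ->
    prob P (Es s `&` Bad dl dg s (n.+1%:R^-1)) <= eps.
  move=> s; have [mF [hdec h0]] := Fs_props dl dg s.
  exact: meas_lim mF hdec h0 eps eps0.
have [Nf hNf] := fin_all_exists hN.
set M := \max_(s < K) Nf s.
have tM : 0 < (M.+1%:R : R)^-1 by rewrite invr_gt0 ltr0Sn.
have := dir_ineq dl dg tM.
set B := \sum_(s < K) _.
have hB : B <= C * eps.
  rewrite /B /C mulr_suml; apply: ler_sum => s _; apply: ler_wpM2l.
    apply: mulr_ge0; last by apply: addr_ge0.
    by rewrite invr_ge0; exact/ltW/ps_gt0.
  by apply: hNf; exact: leq_bigmax.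
nra.
Qed.


Lemma u1_0 s : u1 (fun _ => 0) s = 0.
Proof. by rewrite /u1 big1 // oppr0 mulr0 mul0r addr0. Qed.

Lemma Mdir_lam (sg : R) s : Mdir (fun i => if i == s then sg else 0) (fun _ => 0) =
  sg * (alpha s - (p s)^-1 * (N1 s + N0 s)).
Proof.
rewrite /Mdir (bigD1 s) //= eqxx big1 ?addr0; last by move=> i /negPf ->; rewrite mul0r.
rewrite (bigD1 s) //= eqxx big1 ?addr0; last first.
  by move=> i /negPf ->; rewrite u1_0; ring.
rewrite u1_0; ring.
Qed.

Lemma Mdir_gam (sg : R) j : Mdir (fun _ => 0) (fun i => if i == j then sg else 0) =
  sg * ((\sum_(s < K) N1 s) / ab - N1 j / (alpha j * p j)).
Proof.
have hsum : \sum_(i < K) (if i == j then sg else 0) = sg.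
  by rewrite (bigD1 j) //= eqxx big1 ?addr0 // => i /negPf ->.
rewrite /Mdir big1 ?add0r; last by move=> i _; rewrite mul0r.
rewrite /u1 hsum.
rewrite (eq_bigr (fun s => sg * N1 s / ab - (if s == j then sg * N1 s / (alpha s * p s) else 0))); last first.
  move=> s _; case: eqP => [->|_].
    field; rewrite (lt0r_neq0 ab_gt0) (lt0r_neq0 (alpha_gt0 j)) (lt0r_neq0 (ps_gt0 j)) //.
  rewrite mul0r addr0 subr0; field; rewrite (lt0r_neq0 ab_gt0) (lt0r_neq0 (ps_gt0 s)) //.
rewrite sumrB.
have -> : \sum_(s < K) (if s == j then sg * N1 s / (alpha s * p s) else 0) = sg * N1 j / (alpha j * p j).
  by rewrite (bigD1 j) //= ?eqxx big1 ?addr0 // => i /negPf ->.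
rewrite -mulr_suml -mulr_sumr; ring.
Qed.

Lemma C1 s : N1 s + N0 s = alpha s * p s.
Proof.
have h1 := Mdir_ge0 (fun i => if i == s then 1 else 0) (fun _ => 0).
have h2 := Mdir_ge0 (fun i => if i == s then -1 else 0) (fun _ => 0).
rewrite Mdir_lam mul1r in h1; rewrite Mdir_lam mulN1r in h2.
have e : (p s)^-1 * (N1 s + N0 s) = alpha s by lra.
have p0 := lt0r_neq0 (ps_gt0 s).
by rewrite -e mulrAC mulVf // mul1r.
Qed.

Lemma C2 j : N1 j / (alpha j * p j) = (\sum_(s < K) N1 s) / ab.
Proof.
have h1 := Mdir_ge0 (fun _ => 0) (fun i => if i == j then 1 else 0).
have h2 := Mdir_ge0 (fun _ => 0) (fun i => if i == j then -1 else 0).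
rewrite Mdir_gam mul1r in h1; rewrite Mdir_gam mulN1r in h2.
lra.
Qed.

Lemma gs_feasible : DPWA_feasible P X S alpha gs.
Proof.
split; first exact: msr_gs.
move=> s; split.
  rewrite /NA NR_formula; last exact: msr_gs.
  rewrite -/(N1 s) -/(N0 s) C1 -/(p_of P S s) -/(p s) mulfK //.
  exact: lt0r_neq0 (ps_gt0 s).
rewrite /PTs /PT ONE_formula NR_formula ?ONE_all ?NR_all; try exact: msr_gs.
rewrite -/(N1 s) -/(N0 s) C1.
rewrite [Q in _ = _ / Q](eq_bigr (fun s => alpha s * p s)); last by move=> i _; rewrite -/(N1 i) -/(N0 i) C1.
rewrite (eq_bigr N1) // C2; congr (_ / _).
by rewrite /ab /alphabar; apply: eq_bigr => i _; rewrite mulrC.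
Qed.

End Main.

Theorem theorem1 (R : realType) (d K : nat)
  (d0 : measure_display) (Omega : measurableType d0) (P : probability Omega R)
  (X : Omega -> 'rV[R]_d) (S : Omega -> 'I_K) (Y : Omega -> bool)
  (eta : 'rV[R]_d -> 'I_K -> R) (alpha : 'I_K -> R)
  (lamstar gamstar : 'I_K -> R)
  (mX : forall A, borelRd A -> measurable (X @^-1` A))
  (mS : forall s : 'I_K, measurable (S @^-1` [set s]))
  (mY : measurable (Y @^-1` [set true]))
  (ps_gt0 : forall s : 'I_K, 0 < p_of P S s)
  (alpha_range : forall s : 'I_K, 0 < alpha s <= 1)
  (eta01 : forall x s, 0 <= eta x s <= 1)
  (eta_meas : forall (s : 'I_K) (B : set R), measurable B ->
     borelRd [set x | B (eta x s)])
  (eta_cond : forall (s : 'I_K) (A : set 'rV[R]_d), borelRd A ->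
     (\int[P]_(w in [set w | A (X w) /\ S w = s]) ((Y w)%:R)%:E =
      \int[P]_(w in [set w | A (X w) /\ S w = s]) (eta (X w) (S w))%:E)%E)
  (assump1 : forall (s : 'I_K) (t : R),
     P [set w | S w = s /\ eta (X w) (S w) = t] = 0%E)
  (hmin : forall lam gam : 'I_K -> R,
     (dual_objective P X S eta alpha lamstar gamstar
      <= dual_objective P X S eta alpha lam gam)%E) :
  DPWA_feasible P X S alpha (gstar P S eta alpha lamstar gamstar) /\
  forall g : classifier R d K, DPWA_feasible P X S alpha g ->
    risk P X S Y (gstar P S eta alpha lamstar gamstar) <= risk P X S Y g.
Proof.
have hf : DPWA_feasible P X S alpha (gstar P S eta alpha lamstar gamstar).
  by apply: gs_feasible.
split => // g hg.
by apply: optimal.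
Qed.
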